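(* Let $A$ be a complete Noetherian local ring with maximal ideal $\mathfrak m$, $M$ a finitely generated $A$-module, $M_n=M\otimes_AA/\mathfrak m^n$, and $G_n=\operatorname{Aut}_A(M_n)$, with the natural reduction homomorphisms $G_{n+1}\to G_n$. Then the inverse system $(G_n)_{n\ge1}$ satisfies the Mittag-Leffler condition: for each $n\ge1$ there is $N\ge n$ such that the images of $G_i$ and $G_j$ in $G_n$ coincide for all $i,j\ge N$. *)

(* Defs.v *)
From HB Require Import structures.
From mathcomp Require Import all_boot all_order all_algebra.
Set Implicit Arguments. Unset Strict Implicit. Unset Printing Implicit Defensive.
Import Order.TTheory GRing.Theory.
Local Open Scope ring_scope.

Section CommAlg.
Variable A : comNzRingType.

Definition is_ideal (I : A -> Prop) : Prop :=
  [/\ I 0, (forall x y, I x -> I y -> I (x + y)) & (forall a x, I x -> I (a * x))].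

Definition proper_ideal (I : A -> Prop) : Prop := is_ideal I /\ ~ I 1.

Definition maximal_ideal (I : A -> Prop) : Prop :=
  proper_ideal I /\
  forall J : A -> Prop, proper_ideal J -> (forall x, I x -> J x) -> forall x, J x -> I x.

Definition local_ring_with (m : A -> Prop) : Prop :=
  maximal_ideal m /\ forall J, maximal_ideal J -> forall x, J x <-> m x.

Definition noetherian_ring : Prop :=
  forall I : A -> Prop, is_ideal I -> exists s : seq A,
    forall x, I x <-> exists c : seq A, x = \sum_(i < size s) c`_i * s`_i.

Fixpoint ideal_pow (m : A -> Prop) (n : nat) : A -> Prop :=
  match n with
  | 0 => fun _ => True
  | n'.+1 => fun x => exists s : seq (A * A),
      (forall p, p \in s -> m p.1 /\ ideal_pow m n' p.2) /\
      x = \sum_(p <- s) p.1 * p.2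
  end.

Definition madic_complete (m : A -> Prop) : Prop :=
  (forall x, (forall n, ideal_pow m n x) -> x = 0) /\
  (forall a : nat -> A, (forall k, ideal_pow m k (a k.+1 - a k)) ->
     exists l, forall k, ideal_pow m k (l - a k)).

Variable M : lmodType A.

Definition fin_gen_module : Prop :=
  exists s : seq M, forall x : M, exists c : seq A,
    x = \sum_(i < size s) c`_i *: s`_i.

Definition mod_pow (m : A -> Prop) (n : nat) (x : M) : Prop :=
  exists s : seq (A * M), (forall p, p \in s -> ideal_pow m n p.1) /\
    x = \sum_(p <- s) p.1 *: p.2.

(* g : M -> M induces a well-defined A-linear automorphism of M / N
   (N a submodule given as predicate). Elements of Aut_A(M/N) are exactly
   the classes of such maps modulo "g x - g' x in N for all x". *)
Definition aut_mod (N : M -> Prop) (g : M -> M) : Prop :=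
  [/\ (forall x y, N (x - y) -> N (g x - g y)),
      (forall x y, N (g (x + y) - (g x + g y))),
      (forall (a : A) x, N (g (a *: x) - a *: g x)),
      (forall x y, N (g x - g y) -> N (x - y)) &
      (forall y, exists x, N (g x - y))].

(* G_n = Aut_A(M_n), M_n = M ⊗ A/m^n = M / m^n M. *)
Definition G_elt (m : A -> Prop) (n : nat) (g : M -> M) : Prop :=
  aut_mod (mod_pow m n) g.

Definition in_image (m : A -> Prop) (n i : nat) (g : M -> M) : Prop :=
  exists h : M -> M, G_elt m i h /\ forall x, mod_pow m n (h x - g x).

End CommAlg.

(* Main.v *)
Require Import Defs.
From HB Require Import structures.
From mathcomp Require Import all_boot all_order all_algebra.
From Stdlib Require Import Classical.
Set Implicit Arguments. Unset Strict Implicit. Unset Printing Implicit Defensive.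
Import GRing.Theory.
Local Open Scope ring_scope.

Section Ideals.
Variable A : comNzRingType.
Variable m : A -> Prop.
Hypothesis mI : is_ideal m.

Lemma ideal_pow_ideal j : is_ideal (ideal_pow m j).
Proof.
elim: j => [|j IH] /=; first by split.
split.
- by exists [::]; rewrite big_nil.
- move=> x y [s [Hs ->]] [t [Ht ->]]; exists (s ++ t); rewrite big_cat; split=> //.
  by move=> p; rewrite mem_cat => /orP [/Hs|/Ht].
- move=> a x [s [Hs ->]]; exists (map (fun p => (a * p.1, p.2)) s); split.
  + move=> p /mapP [q /Hs [H1 H2] ->] /=; split=> //.
    by case: mI => _ _; apply.
  + by rewrite big_map big_distrr /=; apply: eq_bigr => p _; rewrite mulrA.
Qed.

Lemma ip0 j : ideal_pow m j 0.
Proof. by case: (ideal_pow_ideal j). Qed.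
Lemma ipD j x y : ideal_pow m j x -> ideal_pow m j y -> ideal_pow m j (x + y).
Proof. by case: (ideal_pow_ideal j) => _ H _; apply: H. Qed.
Lemma ipM j a x : ideal_pow m j x -> ideal_pow m j (a * x).
Proof. by case: (ideal_pow_ideal j) => _ _ H; apply: H. Qed.

Lemma ip_sum j (s : seq (A * A)) (F : A * A -> A) :
  (forall p, p \in s -> ideal_pow m j (F p)) -> ideal_pow m j (\sum_(p <- s) F p).
Proof.
elim: s => [|x s IH] H; first by rewrite big_nil; apply: ip0.
rewrite big_cons; apply: ipD; first by apply: H; rewrite inE eqxx.
by apply: IH => p Hp; apply: H; rewrite inE Hp orbT.
Qed.

Lemma ipS j x : ideal_pow m j.+1 x -> ideal_pow m j x.
Proof.
move=> [s [Hs ->]]; apply: ip_sum => p /Hs [_ H2].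
by apply: ipM.
Qed.

Lemma ip_le k j x : (k <= j)%N -> ideal_pow m j x -> ideal_pow m k x.
Proof.
move=> /subnK <-; elim: (j - k)%N => [|d IH] // H.
by apply: IH; apply: ipS; rewrite -addSn.
Qed.

Lemma ip_mul j k a b : ideal_pow m j a -> ideal_pow m k b -> ideal_pow m (j + k) (a * b).
Proof.
elim: j a => [|j IH] a /=.
  by move=> _ Hb; exact: ipM.
move=> [s [Hs ->]] Hb /=.
exists (map (fun p => (p.1, p.2 * b)) s); split.
  by move=> p /mapP [q /Hs [H1 H2] ->] /=; split=> //; apply: IH.
by rewrite big_map big_distrl /=; apply: eq_bigr => p _; rewrite mulrA.
Qed.

Lemma ip1 a : m a -> ideal_pow m 1 a.
Proof.
by move=> Ha; exists [:: (a, 1)]; rewrite big_seq1 mulr1; split=> // p; rewrite inE => /eqP ->.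
Qed.

Lemma ip_m j a b : m a -> ideal_pow m j b -> ideal_pow m j.+1 (a * b).
Proof. by move=> Ha Hb; rewrite -add1n; apply: ip_mul => //; apply: ip1. Qed.

End Ideals.
Section Modules.
Variable A : comNzRingType.
Variable m : A -> Prop.
Hypothesis mI : is_ideal m.
Variable V : lmodType A.

Definition sub (P : V -> Prop) :=
  [/\ P 0, forall x y, P x -> P y -> P (x + y) & forall a x, P x -> P (a *: x)].
Definition incl (P Q : V -> Prop) := forall x, P x -> Q x.

Lemma sub0 P : sub P -> P 0. Proof. by case. Qed.
Lemma subD P x y : sub P -> P x -> P y -> P (x + y). Proof. by case=> _ H _; apply: H. Qed.
Lemma subZ P a x : sub P -> P x -> P (a *: x). Proof. by case=> _ _ H; apply: H. Qed.
Lemma subN P x : sub P -> P x -> P (- x).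
Proof. by move=> sP Px; rewrite -scaleN1r; apply: subZ. Qed.
Lemma subB P x y : sub P -> P x -> P y -> P (x - y).
Proof. by move=> sP Px Py; apply: subD => //; apply: subN. Qed.
Lemma sub_sum P (I : eqType) (s : seq I) (F : I -> V) : sub P -> (forall i, i \in s -> P (F i)) ->
  P (\sum_(i <- s) F i).
Proof.
move=> sP; elim: s => [|x s IH] H; first by rewrite big_nil; apply: sub0.
rewrite big_cons; apply: subD => //; first by apply: H; rewrite inE eqxx.
by apply: IH => i Hi; apply: H; rewrite inE Hi orbT.
Qed.

Lemma mp_sub j : sub (mod_pow m j).
Proof.
split.
- by exists [::]; rewrite big_nil.
- move=> x y [s [Hs ->]] [t [Ht ->]]; exists (s ++ t); rewrite big_cat; split=> //.
  by move=> p; rewrite mem_cat => /orP [/Hs|/Ht].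
- move=> a x [s [Hs ->]]; exists (map (fun p => (a * p.1, p.2)) s); split.
  + by move=> p /mapP [q /Hs H1 ->] /=; apply: ipM.
  + by rewrite big_map scaler_sumr /=; apply: eq_bigr => p _; rewrite scalerA.
Qed.

Lemma mp_single j a (z : V) : ideal_pow m j a -> mod_pow m j (a *: z).
Proof.
by move=> Ha; exists [:: (a, z)]; rewrite big_seq1; split=> // p; rewrite inE => /eqP ->.
Qed.

Lemma mp_ind j (S : V -> Prop) : sub S -> (forall a z, ideal_pow m j a -> S (a *: z)) ->
  incl (mod_pow m j) S.
Proof. by move=> sS H x [s [Hs ->]]; apply: sub_sum => // p /Hs; apply: H. Qed.

Lemma mp_le k j : (k <= j)%N -> incl (mod_pow m j) (mod_pow m k).
Proof.
move=> Hkj; apply: mp_ind; first exact: mp_sub.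
by move=> a z Ha; apply: mp_single; apply: ip_le Hkj Ha.
Qed.

Lemma mp0 (x : V) : mod_pow m 0 x.
Proof. by rewrite -(scale1r x); apply: mp_single. Qed.

Lemma mp_mul j k a (w : V) : ideal_pow m j a -> mod_pow m k w -> mod_pow m (j + k) (a *: w).
Proof.
move=> Ha; apply: (@mp_ind k (fun w => mod_pow m (j + k) (a *: w))).
- split; first by rewrite scaler0; apply: sub0; apply: mp_sub.
  + by move=> x y Hx Hy; rewrite scalerDr; apply: subD => //; apply: mp_sub.
  + move=> b x Hx; rewrite scalerA mulrC -scalerA; apply: subZ => //; apply: mp_sub.
- by move=> b z Hb; rewrite scalerA; apply: mp_single; apply: ip_mul.
Qed.

Fixpoint ext (B : V -> Prop) (us : seq V) : V -> Prop :=
  match us with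
  | [::] => B
  | u :: us => fun x => exists y a, ext B us y /\ x = y + a *: u
  end.

Lemma ext_sub B us : sub B -> sub (ext B us).
Proof.
move=> sB; elim: us => [|u us IH] //=; split.
- by exists 0, 0; rewrite scale0r addr0; split=> //; apply: sub0.
- move=> x y [x1 [a [H1 ->]]] [y1 [b [H2 ->]]]; exists (x1 + y1), (a + b); split.
    exact: subD.
  by rewrite scalerDl addrACA.
- move=> c x [x1 [a [H1 ->]]]; exists (c *: x1), (c * a); split; first exact: subZ.
  by rewrite scalerDr scalerA.
Qed.

Lemma ext_B B us : sub B -> incl B (ext B us).
Proof.
move=> sB; elim: us => [|u us IH] x Hx //=.
by exists x, 0; rewrite scale0r addr0; split=> //; apply: IH.
Qed.

Lemma ext_u B us u a : sub B -> u \in us -> ext B us (a *: u).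
Proof.
move=> sB; elim: us => [|v us IH] //=; rewrite inE => /orP [/eqP ->|Hu].
  by exists 0, a; rewrite add0r; split=> //; apply: sub0; apply: ext_sub.
by exists (a *: u), 0; rewrite scale0r addr0; split=> //; apply: IH.
Qed.

Lemma ext_min B us S : sub S -> incl B S -> (forall u, u \in us -> S u) ->
  incl (ext B us) S.
Proof.
move=> sS HB; elim: us => [|u us IH] Hu x //=; first exact: HB.
move=> [y [a [Hy ->]]]; apply: subD => //.
  by apply: IH => // v Hv; apply: Hu; rewrite inE Hv orbT.
by apply: subZ => //; apply: Hu; rewrite inE eqxx.
Qed.

Definition cl (B U P : V -> Prop) x := exists p b, [/\ P p, U p, B b & x = p + b].
Definition monoc (N : nat -> V -> Prop) :=
  (forall i j, (i <= j)%N -> incl (N i) (N j)) \/ (forall i j, (i <= j)%N -> incl (N j) (N i)).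
Definition stab (B U : V -> Prop) := forall N, (forall i, sub (N i)) -> monoc N ->
  exists K, forall i, (K <= i)%N -> forall x, cl B U (N i) x <-> cl B U (N K) x.

Lemma cl_sub B U P : sub B -> sub U -> sub P -> sub (cl B U P).
Proof.
move=> sB sU sP; split.
- by exists 0, 0; rewrite addr0; split=> //; apply: sub0.
- move=> x y [p [b [H1 H2 H3 ->]]] [q [c [H4 H5 H6 ->]]].
  by exists (p + q), (b + c); rewrite addrACA; split=> //; apply: subD.
- move=> a x [p [b [H1 H2 H3 ->]]].
  by exists (a *: p), (a *: b); rewrite scalerDr; split=> //; apply: subZ.
Qed.

Lemma cl_mono B U P Q : incl P Q -> incl (cl B U P) (cl B U Q).
Proof. by move=> H x [p [b [H1 H2 H3 ->]]]; exists p, b; split=> //; apply: H. Qed.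

Lemma cl_B B U P : sub U -> sub P -> incl B (cl B U P).
Proof. by move=> sU sP b Hb; exists 0, b; rewrite add0r; split=> //; apply: sub0. Qed.

Lemma cl_U B U P : sub U -> incl B U -> incl (cl B U P) U.
Proof. by move=> sU HBU x [p [b [H1 H2 H3 ->]]]; apply: subD => //; apply: HBU. Qed.

Lemma cl_in B U P x : incl B P -> sub P -> cl B U P x -> P x.
Proof. by move=> HB sP [p [b [H1 H2 H3 ->]]]; apply: subD => //; apply: HB. Qed.

Lemma modl B X U P Q : sub B -> sub X -> sub P -> sub Q -> incl P Q -> incl B P ->
  (forall x, cl B X P x <-> cl B X Q x) -> (forall x, cl X U P x <-> cl X U Q x) ->
  incl Q U -> incl Q P.
Proof.
move=> sB sX sP sQ PQ BP e1 e2 QU q Hq.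
have : cl X U Q q by exists q, 0; rewrite addr0; split=> //; [apply: QU|apply: sub0].
move/e2 => [p [y [Hp _ Hy Hq']]].
have Qy : Q y.
  rewrite (_ : y = q - p); last by rewrite Hq' addrC addKr.
  by apply: subB => //; apply: PQ.
have : cl B X Q y by exists y, 0; rewrite addr0; split=> //; apply: sub0.
move/e1 => /(cl_in BP sP) Py.
by rewrite Hq'; apply: subD.
Qed.

Lemma stab_trans B X U : sub B -> sub X -> sub U -> incl B X -> incl X U ->
  stab B X -> stab X U -> stab B U.
Proof.
move=> sB sX sU BX XU s1 s2 N sN mN.
pose P i := cl B U (N i).
have sP i : sub (P i) by apply: cl_sub.
have mP : monoc P.
  by case: mN => H; [left|right] => i j Hij; apply: cl_mono; apply: H.
have BP i : incl B (P i) by apply: cl_B.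
have PU i : incl (P i) U by apply: cl_U => // x /BX /XU.
have [K1 H1] := s1 P sP mP.
have [K2 H2] := s2 P sP mP.
exists (maxn K1 K2) => i Hi.
have HK1 : (K1 <= maxn K1 K2)%N by rewrite leq_maxl.
have HK2 : (K2 <= maxn K1 K2)%N by rewrite leq_maxr.
have HiK1 : (K1 <= i)%N by apply: leq_trans Hi.
have HiK2 : (K2 <= i)%N by apply: leq_trans Hi.
have E1 : forall x, cl B X (P i) x <-> cl B X (P (maxn K1 K2)) x.
  by move=> x; rewrite (H1 _ HiK1) (H1 _ HK1).
have E2 : forall x, cl X U (P i) x <-> cl X U (P (maxn K1 K2)) x.
  by move=> x; rewrite (H2 _ HiK2) (H2 _ HK2).
have E1' x : cl B X (P (maxn K1 K2)) x <-> cl B X (P i) x by rewrite E1.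
have E2' x : cl X U (P (maxn K1 K2)) x <-> cl X U (P i) x by rewrite E2.
case: mP => H x; split.
- exact: (modl sB sX (sP _) (sP _) (H _ _ Hi) (BP _) E1' E2' (PU _)).
- exact: (H _ _ Hi).
- exact: (H _ _ Hi).
- exact: (modl sB sX (sP _) (sP _) (H _ _ Hi) (BP _) E1 E2 (PU _)).
Qed.

Lemma stab_restrict B U U' : sub U' -> incl U' U -> stab B U -> stab B U'.
Proof.
move=> sU' U'U sBU N sN mN.
pose N' i x := N i x /\ U' x.
have sN' i : sub (N' i).
  split; first by split; apply: sub0.
  + by move=> x y [? ?] [? ?]; split; apply: subD.
  + by move=> a x [? ?]; split; apply: subZ.
have mN' : monoc N'.
  by case: mN => H; [left|right] => i j Hij x [H1 H2]; split=> //; apply: (H _ _ Hij).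
have [K HK] := sBU N' sN' mN'.
have E i x : cl B U (N' i) x <-> cl B U' (N i) x.
  split; move=> [p [b [H1 H2 H3 ->]]]; exists p, b.
    by case: H1.
  by split=> //; apply: U'U.
by exists K => i Hi x; rewrite -E -E HK.
Qed.

Lemma stab_refl B : sub B -> stab B B.
Proof.
move=> sB N sN mN; exists 0%N => i _ x.
suff E : forall j, cl B B (N j) x <-> B x by rewrite !E.
move=> j; split; first by move=> [p [b [_ H2 H3 ->]]]; apply: subD.
by apply: cl_B.
Qed.

Hypothesis hmax : forall J : A -> Prop, Defs.proper_ideal J -> (forall x, m x -> J x) -> forall x, J x -> m x.

Lemma unit_mod a : ~ m a -> exists r c, m r /\ 1 = r + c * a.
Proof.
move=> Ha.
pose J y := exists r c, m r /\ y = r + c * a.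
have JI : is_ideal J.
  case: mI => m0 mD mM; split.
  - by exists 0, 0; rewrite mul0r addr0.
  - move=> x y [r1 [c1 [H1 ->]]] [r2 [c2 [H2 ->]]]; exists (r1 + r2), (c1 + c2).
    by rewrite mulrDl addrACA; split=> //; apply: mD.
  - move=> b x [r1 [c1 [H1 ->]]]; exists (b * r1), (b * c1).
    by rewrite mulrDr mulrA; split=> //; apply: mM.
apply: NNPP => Hn; apply: Ha.
apply: (hmax (J := J)).
- split=> // [[r [c [H1 H2]]]]; apply: Hn; by exists r, c.
- by move=> x Hx; exists x, 0; rewrite mul0r addr0.
- by exists 0, 1; rewrite mul1r add0r; split=> //; case: mI.
Qed.

Lemma dich B u P : sub B -> (forall a, m a -> B (a *: u)) -> sub P -> incl B P ->
  incl P (ext B [:: u]) -> incl P B \/ incl (ext B [:: u]) P.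
Proof.
move=> sB Hu sP BP PU.
case: (classic (exists x, P x /\ ~ B x)) => [[x [Px nBx]]|H]; last first.
  by left=> x Px; apply: NNPP => nB; apply: H; exists x.
right.
have := PU _ Px => /= [[y [a [By Ex]]]].
have nma : ~ m a by move=> ma; apply: nBx; rewrite Ex; apply: subD => //; apply: Hu.
have [r [c [mr E1]]] := unit_mod nma.
have Pau : P (a *: u).
  by rewrite (_ : a *: u = x - y); [apply: subB => //; apply: BP|rewrite Ex addrC addKr].
have Pu : P u.
  rewrite -(scale1r u) E1 scalerDl; apply: subD => //; first by apply: BP; apply: Hu.
  by rewrite -scalerA; apply: subZ.
by move=> z /= [y' [a' [By' ->]]]; apply: subD => //; [apply: BP|apply: subZ].
Qed.

Lemma stab_cyc B u : sub B -> (forall a, m a -> B (a *: u)) -> stab B (ext B [:: u]).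
Proof.
move=> sB Hu N sN mN.
set U := ext B [:: u].
have sU : sub U by apply: ext_sub.
pose P i := cl B U (N i).
have sP i : sub (P i) by apply: cl_sub.
have BP i : incl B (P i) by apply: cl_B.
have BU : incl B U by apply: ext_B.
have PU i : incl (P i) U by apply: cl_U.
have D i : incl (P i) B \/ incl U (P i) by apply: dich.
have mP : monoc P.
  by case: mN => H; [left|right] => i j Hij; apply: cl_mono; apply: H.
rewrite /stab /= -/U -/P.
case: mP => H.
- case: (classic (exists i0, incl U (P i0))) => [[i0 Hi0]|Hn].
    exists i0 => i Hi x; split; first by move/PU; apply: Hi0.
    by apply: H.
  have Hb i : incl (P i) B by case: (D i) => // H'; exfalso; apply: Hn; exists i.
  by exists 0%N => i _ x; split => /Hb; apply: BP.
- case: (classic (exists i0, incl (P i0) B)) => [[i0 Hi0]|Hn].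
    exists i0 => i Hi x; split; first by move/(H _ _ Hi)/Hi0; apply: BP.
    by move/Hi0; apply: BP.
  have Hb i : incl U (P i) by case: (D i) => // H'; exfalso; apply: Hn; exists i.
  by exists 0%N => i _ x; split => /PU; apply: Hb.
Qed.

Lemma stab_ext B us : sub B -> (forall u a, u \in us -> m a -> B (a *: u)) ->
  stab B (ext B us).
Proof.
move=> sB; elim: us => [|u us IH] H /=; first exact: stab_refl.
apply: (@stab_trans _ (ext B us)) => //.
- exact: ext_sub.
- exact: (ext_sub (u :: us) sB).
- exact: ext_B.
- by move=> x Hx; exists x, 0; rewrite scale0r addr0.
- by apply: IH => v a Hv ma; apply: H => //; rewrite inE Hv orbT.
- apply: (@stab_cyc (ext B us) u); first exact: ext_sub.
  by move=> a ma; apply: ext_B => //; apply: H => //; rewrite inE eqxx.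
Qed.

End Modules.

Section Filt.
Variable A : comNzRingType.
Variable m : A -> Prop.
Hypothesis mI : is_ideal m.
Hypothesis hmax : forall J : A -> Prop, Defs.proper_ideal J -> (forall x, m x -> J x) -> forall x, J x -> m x.
Hypothesis hnoeth : noetherian_ring A.

Lemma gens_ideal j : exists ts : seq A, (forall t, t \in ts -> ideal_pow m j t) /\
  forall x, ideal_pow m j x -> exists c : seq A, x = \sum_(i < size ts) c`_i * ts`_i.
Proof.
have [ts Hts] := hnoeth (ideal_pow_ideal mI j).
exists ts; split; last by move=> x /Hts.
move=> t Ht; apply/Hts.
have Hk : (index t ts < size ts)%N by rewrite index_mem.
exists (mkseq (fun i => (i == index t ts)%:R) (size ts)).
rewrite (bigD1 (Ordinal Hk)) //= big1 ?addr0.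
  by rewrite nth_mkseq // eqxx mul1r nth_index.
move=> i Hi; rewrite nth_mkseq //; case: eqP => [E|_]; last by rewrite mul0r.
by exfalso; move: Hi; apply/negP; rewrite negbK; apply/eqP/val_inj.
Qed.

Variable V : lmodType A.
Variable gs : seq V.
Hypothesis hgs : forall x : V, ext (fun x => x = 0) gs x.

Lemma filt j : stab (mod_pow (M := V) m j.+1) (mod_pow m j).
Proof.
have [ts [Hts1 Hts2]] := gens_ideal j.
pose us := [seq t *: g | t <- ts, g <- gs].
have sB : sub (mod_pow (M := V) m j.+1) by apply: mp_sub.
apply: (stab_restrict (U := ext (mod_pow m j.+1) us)).
- exact: mp_sub.
- apply: mp_ind => //; first exact: ext_sub.
  move=> a z Ha.
  pose S' z := forall a, ideal_pow m j a -> ext (mod_pow m j.+1) us (a *: z).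
  suff : S' z by apply.
  apply: (ext_min (B := fun x => x = 0) (us := gs)); last exact: hgs.
  + split.
    * by move=> b _; rewrite scaler0; apply: sub0; apply: ext_sub.
    * by move=> x y Hx Hy b Hb; rewrite scalerDr; apply: subD; [apply: ext_sub|apply: Hx|apply: Hy].
    * move=> c x Hx b Hb; rewrite scalerA mulrC -scalerA; apply: subZ; first exact: ext_sub.
      exact: Hx.
  + by move=> x -> b _; rewrite scaler0; apply: sub0; apply: ext_sub.
  + move=> g Hg b /Hts2 [c ->]; rewrite scaler_suml.
    apply: sub_sum; first exact: ext_sub.
    move=> i _; rewrite -scalerA; apply: ext_u => //.
    by apply: allpairs_f => //; apply: mem_nth.
- apply: (stab_ext mI hmax) => //.
  move=> u a /allpairsP [[t g] [/= Ht Hg ->]] ma.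
  by rewrite scalerA; apply: mp_single; apply: ip_m => //; apply: Hts1.
Qed.

Lemma stab_all j : stab (mod_pow (M := V) m j) (fun _ => True).
Proof.
elim: j => [|j IH].
  apply: (stab_restrict (U := mod_pow m 0)).
  - by split.
  - by move=> x _; apply: mp0.
  - by apply: stab_refl; apply: mp_sub.
apply: (stab_trans (X := mod_pow m j)).
- exact: mp_sub.
- exact: mp_sub.
- by split.
- exact: mp_le.
- by [].
- exact: filt.
- exact: IH.
Qed.

End Filt.

Section Cong.
Variable A : comNzRingType.
Variable V : lmodType A.
Variable N : V -> Prop.
Hypothesis sN : sub N.

Lemma cg_refl x : N (x - x). Proof. by rewrite subrr; apply: sub0. Qed.
Lemma cg_sym x y : N (x - y) -> N (y - x).
Proof. by move=> H; rewrite -opprB; apply: subN. Qed.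
Lemma cg_trans x y z : N (x - y) -> N (y - z) -> N (x - z).
Proof.
move=> H1 H2; rewrite (_ : x - z = (x - y) + (y - z)); first exact: subD.
by rewrite addrA subrK.
Qed.
Lemma cg_add a a' b b' : N (a - a') -> N (b - b') -> N ((a + b) - (a' + b')).
Proof. by move=> H1 H2; rewrite opprD addrACA; apply: subD. Qed.
Lemma cg_scale c x y : N (x - y) -> N (c *: x - c *: y).
Proof. by move=> H; rewrite -scalerBr; apply: subZ. Qed.
Lemma cg_in x y : N (x - y) -> N y -> N x.
Proof. by move=> H1 H2; rewrite -(subrK y x); apply: subD. Qed.
Lemma cg_in' x y : N (x - y) -> N x -> N y.
Proof. by move=> H1 H2; apply: (cg_in (cg_sym H1)). Qed.

Definition lin (h : V -> V) :=
  (forall x y, N (h (x + y) - (h x + h y))) /\ (forall a x, N (h (a *: x) - a *: h x)).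

Lemma lin_0 h : lin h -> N (h 0).
Proof.
case=> H _; have := H 0 0; rewrite addr0 opprD addrA subrr add0r.
by move/(subN sN); rewrite opprK.
Qed.

Lemma lin_ker h : lin h -> sub (fun x => N (h x)).
Proof.
move=> lh; case: (lh) => H1 H2; split.
- exact: lin_0.
- move=> x y Hx Hy; apply: (cg_in (H1 x y)); exact: subD.
- move=> a x Hx; apply: (cg_in (H2 a x)); exact: subZ.
Qed.

Lemma lin_id : lin id.
Proof. by split=> *; apply: cg_refl. Qed.

End Cong.

Section Endo.
Variable A : comNzRingType.
Variable m : A -> Prop.
Hypothesis mI : is_ideal m.
Variable M : lmodType A.
Notation Np j := (mod_pow (M := M) m j).

Lemma lin_le k j h : (k <= j)%N -> lin (Np j) h -> lin (Np k) h.
Proof. by move=> Hkj [H1 H2]; split=> *; apply: (mp_le mI Hkj); [apply: H1|apply: H2]. Qed.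

Lemma lin_img j h : lin (Np j) h -> incl (Np j) (fun z => Np j (h z)).
Proof.
move=> lh; apply: mp_ind; first by apply: lin_ker => //; apply: (mp_sub mI).
move=> a z Ha; case: lh => _ H2; apply: (cg_in (mp_sub mI _ _) (H2 a z)).
exact: mp_single.
Qed.

Lemma lin_wd j h x y : lin (Np j) h -> Np j (x - y) -> Np j (h x - h y).
Proof.
move=> lh Hxy; have sN := mp_sub mI M j.
have H := (proj1 lh) y (x - y); rewrite (addrC y (x - y)) subrK in H.
have Hz := lin_img lh Hxy.
rewrite (_ : h x - h y = (h x - (h y + h (x - y))) + h (x - y)); first exact: subD.
by rewrite opprD addrA subrK.
Qed.

Lemma lin_comp j f g : lin (Np j) f -> lin (Np j) g -> lin (Np j) (f \o g).
Proof.
move=> lf lg; have sN := mp_sub mI M j; split=> [x y|a x] /=.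
- apply: (cg_trans sN (y := f (g x + g y))); last exact: (proj1 lf).
  by apply: lin_wd => //; apply: (proj1 lg).
- apply: (cg_trans sN (y := f (a *: g x))); last exact: (proj2 lf).
  by apply: lin_wd => //; apply: (proj2 lg).
Qed.

Lemma lin_iter j h k : lin (Np j) h -> lin (Np j) (iter k h).
Proof.
move=> lh; elim: k => [|k IH]; first exact: (lin_id (mp_sub mI _ _)).
exact: (lin_comp lh IH).
Qed.

End Endo.

Section Lift.
Variable A : comNzRingType.
Variable m : A -> Prop.
Hypothesis mI : is_ideal m.
Hypothesis hmax : forall J : A -> Prop, Defs.proper_ideal J -> (forall x, m x -> J x) -> forall x, J x -> m x.
Hypothesis hnoeth : noetherian_ring A.
Variable M : lmodType A.
Notation Np j := (mod_pow (M := M) m j).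
Variable gs : seq M.
Hypothesis hgs : forall x : M, ext (fun x => x = 0) gs x.

Lemma sNp j : sub (Np j). Proof. exact: mp_sub. Qed.

Lemma close n g h : lin (Np n) g -> lin (Np n) h ->
  (forall s, s \in gs -> Np n (g s - h s)) -> forall x, Np n (h x - g x).
Proof.
move=> lg lh Hs x; have sN := sNp n.
apply: (ext_min (B := fun x => x = 0) (us := gs) (S := fun x => Np n (h x - g x))); last exact: hgs.
- split.
  + by apply: subB => //; apply: lin_0.
  + move=> u v Hu Hv.
    apply: (cg_trans sN (proj1 lh u v)).
    apply: (cg_trans sN (y := g u + g v)); first exact: cg_add.
    exact: cg_sym (proj1 lg u v).
  + move=> a u Hu.
    apply: (cg_trans sN (proj2 lh a u)).
    apply: (cg_trans sN (y := a *: g u)); first exact: cg_scale.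
    exact: cg_sym (proj2 lg a u).
- by move=> u ->; apply: subB => //; apply: lin_0.
- by move=> s /Hs; apply: cg_sym.
Qed.

Lemma lift n i g h : (0 < n)%N -> (n <= i)%N -> G_elt m n g -> lin (Np i) h ->
  (forall s, s \in gs -> Np n (g s - h s)) -> G_elt m i h /\ forall x, Np n (h x - g x).
Proof.
move=> n0 ni [gwd gadd gsc ginj gsurj] lh Hs.
have lg : lin (Np n) g by split.
have lhn : lin (Np n) h by apply: lin_le lh.
have Hc := close lg lhn Hs.
have sNi := sNp i.
have surj : forall j, (j <= i)%N -> forall y, exists x, Np j (h x - y).
  elim=> [|j IH] Hj y; first by exists 0; apply: mp0.
  have [x Hx] := IH (ltnW Hj) y.
  have lhj : lin (Np j.+1) h by apply: lin_le lh.
  have sNj := sNp j.+1.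
  pose S w := exists x', Np j.+1 (h x' - w).
  have sS : sub S.
    split.
    - by exists 0; rewrite subr0; apply: lin_0.
    - move=> u v [x1 H1] [x2 H2]; exists (x1 + x2).
      apply: (cg_trans sNj (proj1 lhj x1 x2)); exact: cg_add.
    - move=> a u [x1 H1]; exists (a *: x1).
      apply: (cg_trans sNj (proj2 lhj a x1)); exact: cg_scale.
  have NS : incl (Np j) S.
    apply: mp_ind => // a z Ha.
    have [x0 Hx0] := gsurj z.
    have H1 : Np 1 (h x0 - z).
      apply: (mp_le mI n0); apply: (cg_trans (sNp n) (Hc x0)); exact: Hx0.
    exists (a *: x0); apply: (cg_trans sNj (proj2 lhj a x0)).
    rewrite -scalerBr -addn1; exact: mp_mul.
  have : S (h x - (h x - y)).
    apply: subB => //; last exact: NS.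
    by exists x; apply: cg_refl.
  by rewrite opprB addrC subrK.
have surji := surj i (leqnn i).
have inj : forall x y, Np i (h x - h y) -> Np i (x - y).
  move=> x y Hxy; set z := x - y.
  have Hz : Np i (h z).
    have H := (proj1 lh) y z; rewrite /z (addrC y (x - y)) subrK in H.
    have := cg_trans sNi (cg_sym sNi Hxy) H.
    by rewrite opprD addNKr => /(subN sNi); rewrite opprK.
  pose K k (u : M) := Np i (iter k h u).
  have sK k : sub (K k).
    have lk : lin (Np i) (iter k h) by apply: (lin_iter mI).
    exact: (@lin_ker _ _ (Np i) sNi (iter k h) lk).
  have KS k u : K k u -> K k.+1 u.
    move=> Hu; rewrite /K /=; apply: (lin_img mI lh Hu).
  have mK : monoc K.
    left=> k j /subnK <-; elim: (j - k)%N => [|d IH] u Hu //.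
    by rewrite addSn; apply: KS; apply: IH.
  have NK k : incl (Np i) (K k).
    by apply: (lin_img mI); apply: (lin_iter mI).
  have [k0 Hk0] := stab_all mI hmax hnoeth hgs i sK mK.
  have EK k u : (k0 <= k)%N -> K k u -> K k0 u.
    move=> Hk Hu; have : cl (Np i) (fun _ => True) (K k) u.
      by exists u, 0; rewrite addr0; split=> //; apply: sub0.
    by rewrite Hk0 // => /(cl_in (NK k0) (sK k0)).
  have isurj : forall k y, exists w, Np i (iter k h w - y).
    elim=> [|k IH] y'; first by exists y'; apply: cg_refl.
    have [x1 Hx1] := surji y'.
    have [w Hw] := IH x1.
    exists w; rewrite /=; apply: (cg_trans sNi _ Hx1).
    exact: lin_wd.
  have [w Hw] := isurj k0 z.
  have Kw : K k0.+1 w.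
    rewrite /K /=; apply: (cg_in sNi _ Hz); exact: lin_wd.
  have := EK _ _ (leqnSn k0) Kw; rewrite /K => Hw'.
  exact: (cg_in' sNi Hw Hw').
split => //; split => //.
- by move=> x y; apply: lin_wd.
- exact: (proj1 lh).
- exact: (proj2 lh).
Qed.

End Lift.

Lemma fg_ext (A : comNzRingType) (M : lmodType A) (s : seq M) :
  (forall x : M, exists c : seq A, x = \sum_(i < size s) c`_i *: s`_i) ->
  forall x, ext (fun x => x = 0) s x.
Proof.
have sB : sub (fun x : M => x = 0).
  split=> //; [by move=> x y -> ->; rewrite addr0|by move=> a x ->; rewrite scaler0].
move=> H x; have [c ->] := H x.
apply: sub_sum; first exact: ext_sub.
by move=> i _; apply: ext_u => //; apply: mem_nth.
Qed.

Section FF.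
Variable A : comNzRingType.
Variable M : lmodType A.
Variable r : nat.
Definition eF (q : 'I_r) (u : M) : {ffun 'I_r -> M} := [ffun q' => if q' == q then u else 0].

Lemma fg_ffun (gs : seq M) : (forall x : M, ext (fun x => x = 0) gs x) ->
  forall v : {ffun 'I_r -> M},
    ext (fun x => x = 0) [seq eF q g | q <- enum 'I_r, g <- gs] v.
Proof.
move=> hgs v.
set us := [seq eF q g | q <- enum 'I_r, g <- gs].
have sB : sub (fun x : {ffun 'I_r -> M} => x = 0).
  split=> //; [by move=> x y -> ->; rewrite addr0|by move=> a x ->; rewrite scaler0].
have sE := ext_sub us sB.
have Ev : v = \sum_q eF q (v q).
  apply/ffunP => q; rewrite sum_ffunE (bigD1 q) //= big1 ?addr0.
    by rewrite ffunE eqxx.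
  by move=> i Hi; rewrite ffunE eq_sym (negbTE Hi).
rewrite Ev; apply: sub_sum => // q _.
apply: (ext_min (B := fun x => x = 0) (us := gs) (S := fun u => ext (fun x => x = 0) us (eF q u))); last exact: hgs.
- split.
  + rewrite (_ : eF q 0 = 0); first exact: sub0.
    by apply/ffunP => q'; rewrite !ffunE; case: eqP.
  + move=> x y Hx Hy; rewrite (_ : eF q (x + y) = eF q x + eF q y); first exact: subD.
    by apply/ffunP => q'; rewrite !ffunE; case: eqP => // _; rewrite addr0.
  + move=> a x Hx; rewrite (_ : eF q (a *: x) = a *: eF q x); first exact: subZ.
    by apply/ffunP => q'; rewrite !ffunE; case: eqP => // _; rewrite scaler0.
- move=> x ->; rewrite (_ : eF q 0 = 0); first exact: sub0.
  by apply/ffunP => q'; rewrite !ffunE; case: eqP.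
- move=> g Hg; rewrite -(scale1r (eF q g)); apply: ext_u => //.
  by apply: allpairs_f => //; rewrite mem_enum.
Qed.
End FF.

Unset Implicit Arguments.
Set Strict Implicit.

Theorem mainTheorem16 (A : comNzRingType) (m : A -> Prop) (M : lmodType A)
  (hloc : local_ring_with m) (hnoeth : noetherian_ring A)
  (hcompl : madic_complete m) (hfg : fin_gen_module M) :
  forall n : nat, (1 <= n)%N ->
    exists N : nat, (n <= N)%N /\
      forall i j : nat, (N <= i)%N -> (N <= j)%N ->
        forall g : M -> M, G_elt m n g ->
          (in_image m n i g <-> in_image m n j g).
Proof.
move=> n n0.
have [[[mI m1] hmax0] _] := hloc.
have hmax : forall J : A -> Prop, Defs.proper_ideal J -> (forall x, m x -> J x) ->
  forall x, J x -> m x by move=> J pJ HJ x Jx; exact: hmax0 pJ HJ x Jx.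
have [gs hgs0] := hfg.
have hgs := fg_ext hgs0.
set r := size gs.
pose V := {ffun 'I_r -> M}.
have hgV := fg_ffun (r := r) hgs.
pose I i (v : V) := exists h, lin (mod_pow (M := M) m i) h /\
  forall q : 'I_r, mod_pow m n (v q - h (gs`_q)).
have sNn := mp_sub mI M n.
have sI i : sub (I i).
  have sNi := mp_sub mI M i.
  split.
  - exists (fun _ => 0); split.
      by split=> *; rewrite ?addr0 ?scaler0 subrr; apply: sub0.
    by move=> q; rewrite ffunE subrr; apply: sub0.
  - move=> v w [h1 [[l1 l1'] H1]] [h2 [[l2 l2'] H2]]; exists (fun x => h1 x + h2 x); split.
      split=> [x y|a x].
      + by rewrite addrACA; apply: cg_add.
      + by rewrite scalerDr; apply: cg_add.
    by move=> q; rewrite ffunE; apply: cg_add.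
  - move=> a v [h [[l l'] H]]; exists (fun x => a *: h x); split.
      split=> [x y|b x].
      + by rewrite -scalerDr; apply: cg_scale.
      + by rewrite scalerA mulrC -scalerA; apply: cg_scale.
    by move=> q; rewrite ffunE; apply: cg_scale.
have mI' : monoc I.
  right=> i j Hij v [h [lh H]]; exists h; split=> //; exact: lin_le lh.
have BI i : incl (mod_pow (M := V) m n) (I i).
  move=> v Hv; exists (fun _ => 0); split.
    by split=> *; rewrite ?addr0 ?scaler0 subrr; apply: sub0; apply: mp_sub.
  move=> q; rewrite subr0; move: q.
  have HS : incl (mod_pow (M := V) m n) (fun v : V => forall q, mod_pow (M := M) m n (v q)).
    apply: (@mp_ind A m V n).
    + split.
      * by move=> q; rewrite ffunE; apply: sub0.
      * by move=> x y Hx Hy q; rewrite ffunE; apply: subD.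
      * by move=> a x Hx q; rewrite ffunE; apply: subZ.
    + by move=> a z Ha q; rewrite ffunE; apply: mp_single.
  exact: HS Hv.
have [K HK] := stab_all mI hmax hnoeth hgV n sI mI'.
have EI i v : (K <= i)%N -> I i v <-> I K v.
  move=> Hi; have E k u : cl (mod_pow m n) (fun _ => True) (I k) u <-> I k u.
    split; first exact: cl_in (BI k) (sI k).
    by move=> Hu; exists u, 0; rewrite addr0; split=> //; apply: sub0; apply: mp_sub.
  by rewrite -E HK // E.
have key i (g : M -> M) : (n <= i)%N -> G_elt m n g ->
    in_image m n i g <-> I i [ffun q : 'I_r => g (gs`_q)].
  move=> ni Gg; split.
  - move=> [h [[_ l1 l2 _ _] Hh]]; exists h; split; first by split.
    by move=> q; rewrite ffunE; apply: cg_sym => //; apply: Hh.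
  - move=> [h [lh Hh]]; exists h.
    apply: (lift mI hmax hnoeth hgs n0 ni Gg lh).
    move=> s Hs; have Hk : (index s gs < r)%N by rewrite index_mem.
    have := Hh (Ordinal Hk); rewrite ffunE /= nth_index //.
exists (maxn n K); split; first by rewrite leq_maxl.
move=> i j Hi Hj g Gg.
have ni : (n <= i)%N by apply: leq_trans Hi; rewrite leq_maxl.
have nj : (n <= j)%N by apply: leq_trans Hj; rewrite leq_maxl.
have Ki : (K <= i)%N by apply: leq_trans Hi; rewrite leq_maxr.
have Kj : (K <= j)%N by apply: leq_trans Hj; rewrite leq_maxr.
by rewrite (key i g ni Gg) (key j g nj Gg) (EI _ _ Ki) (EI _ _ Kj).
Qed.
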